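(* The set $\mathcal{M}^+(X)$ of fully-supported Borel probability measures on $X=A^{\mathbb{N}}$ is a complete metric space with respect to the projective distance \[ \rho(\mu,\nu)=\sup_{n\in\mathbb{N}}\max_{\pmb{a}\in A^n}\frac{1}{n}\left|\log\frac{\mu[\pmb{a}]}{\nu[\pmb{a}]}\right|. \]
   Context: $A$ is a finite alphabet and $X=A^{\mathbb{N}}$ carries the product (Tychonoff) topology and its Borel $\sigma$-algebra. For a word $\pmb{a}=a_1\cdots a_n\in A^n$, the cylinder set is $[\pmb{a}]=\{\pmb{x}\in X:\ x_1\cdots x_n=\pmb{a}\}$. $\mathcal{M}^+(X)$ denotes the set of Borel probability measures $\mu$ on $X$ with $\mu[\pmb{a}]>0$ for every finite word $\pmb{a}\in\bigcup_{n\in\mathbb{N}}A^n$. *)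

(* Defs.v *)
From HB Require Import structures.
From mathcomp Require Import all_boot all_order all_algebra.
From mathcomp Require Import all_classical all_reals all_analysis.
Set Implicit Arguments. Unset Strict Implicit. Unset Printing Implicit Defensive.
Import Order.TTheory GRing.Theory Num.Theory.
Local Open Scope classical_set_scope.
Local Open Scope ring_scope.

(* The alphabet [A] is a (pointed, hence nonempty) type, assumed finite
   in the theorem.  The topological space X = A^N with the product
   (Tychonoff) topology of the discrete topology on A. *)
Definition Xtop (A : pointedType) : topologicalType :=
  prod_topology (fun _ : nat => discrete_topology A).

Definition Xborel (A : pointedType) :=
  g_sigma_algebraType (@open (Xtop A)).

(* Cylinder set of a word a = a_1 ... a_n (0-based indices in Rocq). *)
Definition cyl (A : pointedType) (n : nat) (a : n.-tuple A) : set (Xborel A) :=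
  [set x : Xborel A | forall i : 'I_n, x (nat_of_ord i) = tnth a i].

Definition fully_supported (A : pointedType) (R : realType)
    (mu : probability (Xborel A) R) : Prop :=
  forall (n : nat) (a : n.-tuple A), (0 < mu (cyl a))%E.

(* Projective distance, n ranging over {1,2,...} (words of length n.+1),
   the sup over n and max over words combined into one extended-real sup. *)
Definition rho (A : pointedType) (R : realType)
    (mu nu : probability (Xborel A) R) : \bar R :=
  ereal_sup [set r | exists (n : nat) (a : n.+1.-tuple A),
     r = ((n.+1)%:R^-1 *
          `| ln (fine (mu (cyl a)) / fine (nu (cyl a))) |)%:E].

(* Main.v *)
Require Import Defs.
From HB Require Import structures.
From mathcomp Require Import all_boot all_order all_algebra.
From mathcomp Require Import all_classical all_reals all_analysis.
Import Order.TTheory GRing.Theory Num.Theory.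
Local Open Scope classical_set_scope.
Local Open Scope ring_scope.
Set Implicit Arguments. Unset Strict Implicit. Unset Printing Implicit Defensive.

Section Topo.
Variable A : pointedType.

Definition pre n (x : nat -> A) : set (Xborel A) :=
  [set y : Xborel A | forall i, (i < n)%N -> y i = x i].

Lemma pre_nbhs n (x : Xtop A) : nbhs x (pre n x : set (Xtop A)).
Proof.
have F := @nbhs_pfilter (Xtop A) x.
elim: n => [|n IH].
  by apply: (@filterS _ _ F setT) => //; exact: (@filterT _ _ F).
have h : nbhs x [set y : Xtop A | y n = x n].
  have := @proj_continuous nat (fun _ : nat => discrete_topology A) n x.
  move=> /(_ [set x n]); apply.
  by [].
apply: (@filterS _ _ F _ _ _ (@filterI _ _ F _ _ IH h)) => y [h1 h2] i; rewrite ltnS leq_eqVlt.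
by case/predU1P => [->|/h1].
Qed.
Lemma open_pre (O : set (Xtop A)) x : open O -> O x ->
  exists n, (pre n x : set (Xtop A)) `<=` O.
Proof.
move=> oO Ox.
pose F := filter_from [set: nat] (fun n => (pre n x : set (Xtop A))).
have FF : Filter F.
  apply: filter_from_filter; first by exists 0%N.
  move=> i j _ _; exists (maxn i j) => // y hy; split => k hk; apply: hy.
    by rewrite (leq_trans hk) // leq_maxl.
  by rewrite (leq_trans hk) // leq_maxr.
have : F --> (x : Xtop A).
  rewrite /Xtop /prod_topology /=.
  apply/(@cvg_sup _ _ _ F x FF) => i.
  move=> U /= hU.
  pose W := initial_topology (fun f : (forall _ : nat, discrete_topology A) => f i).
  have : @nbhs W W (x : W) U by exact: hU.
  rewrite nbhsE /= => -[B [oB Bx] BU].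
  case: oB => C oC CB.
  exists i.+1 => // y hy; apply: BU; rewrite -CB /=; rewrite hy //.
  by move: Bx; rewrite -CB.

move=> /(_ O); case.
  by apply: open_nbhs_nbhs.
by move=> n _ h; exists n.
Qed.

Lemma pre_open n x : @open (Xtop A) (pre n x).
Proof.
rewrite openE => y hy; rewrite /interior.
have -> : (pre n x : set (Xtop A)) = pre n y.
  apply/seteqP; split => z hz i hi; first by rewrite hz // hy.
  by rewrite hz // hy.
exact: pre_nbhs.
Qed.

Definition G : set (set (Xborel A)) :=
  [set S | S = set0 \/ exists n x, S = pre n x].

Variable hA : finite_set [set: A].

Definition s : seq A := finmap.enum_fset (fset_set [set: A]).
Lemma s_mem a : a \in s.
Proof. by rewrite /s in_fset_set // inE. Qed.
Lemma s_uniq : uniq s.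
Proof. exact: finmap.fset_uniq. Qed.

Definition xb (b : seq nat) : nat -> A := fun i => nth point s (nth 0%N b i).

Lemma measurableE : (@measurable _ (Xborel A)) = <<s G >>.
Proof.
apply/seteqP; split; last first.
  apply: sub_sigma_algebra2 => S [->|[n [x ->]]].
    exact: open0.
  exact: pre_open.
apply: smallest_sub; first exact: smallest_sigma_algebra.
move=> O oO.
pose F (p : nat * seq nat) : set (Xborel A) :=
  [set y | (pre p.1 (xb p.2) : set (Xtop A)) `<=` O /\ pre p.1 (xb p.2) y].
have -> : O = \bigcup_p F p.
  apply/seteqP; split; last by move=> y [p _ [h1 h2]]; apply: h1.
  move=> y Oy; have [n hn] := open_pre oO Oy.
  have e : pre n (xb [seq index (y i) s | i <- iota 0 n]) = pre n y.
    apply/seteqP; split => z hz i hi; rewrite hz // /xb.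
      by rewrite (nth_map 0%N) ?size_iota // nth_iota // nth_index // s_mem.
    by rewrite (nth_map 0%N) ?size_iota // nth_iota // nth_index // s_mem.
  exists (n, [seq index (y i) s | i <- iota 0 n]) => //; split.
    by move=> z hz; apply: hn; move: hz; rewrite /= e.
  by rewrite /= e.
have -> : <<s G >> = @measurable _ (g_sigma_algebraType G) by [].
apply: countable_bigcupT_measurable => // p.
have [h|h] := pselect ((pre p.1 (xb p.2) : set (Xtop A)) `<=` O).
  have -> : F p = pre p.1 (xb p.2) by apply/seteqP; split => y //= [].
  by apply: sub_sigma_algebra; right; exists p.1, (xb p.2).
have -> : F p = set0 by apply/seteqP; split => y // [].
exact: measurable0.
Qed.

End Topo.

Section Metric.
Variable A : pointedType.
Variable R : realType.
Variable hA : finite_set [set: A].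

Lemma cyl_pre n (a : n.-tuple A) : cyl a = pre n (fun i => nth point a i).
Proof.
apply/seteqP; split => y hy.
  by move=> i hi; have := hy (Ordinal hi); rewrite (tnth_nth point).
by move=> i; rewrite hy // (tnth_nth point).
Qed.

Lemma pre_cyl n (x : nat -> A) : pre n x = cyl [tuple x i | i < n].
Proof.
apply/seteqP; split => y hy.
  by move=> i; rewrite tnth_mktuple hy.
by move=> i hi; have := hy (Ordinal hi); rewrite tnth_mktuple.
Qed.

Lemma pre_measurable n x : measurable (pre n x : set (Xborel A)).
Proof. by apply: sub_sigma_algebra; apply: pre_open. Qed.

Lemma cyl_measurable n (a : n.-tuple A) : measurable (cyl a).
Proof. rewrite cyl_pre; exact: pre_measurable. Qed.

Lemma pre0 (x : nat -> A) : pre 0 x = setT.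
Proof. by apply/seteqP; split => y // _ i. Qed.

Lemma preI n m (x y : nat -> A) : (n <= m)%N ->
  @G A (pre n x `&` pre m y).
Proof.
move=> nm; have [h|h] := pselect (forall i, (i < n)%N -> y i = x i).
  right; exists m, y; apply/seteqP; split => z; first by case.
  by move=> hz; split => // i hi; rewrite hz ?h // (leq_trans hi).
left; apply/seteqP; split => z // [h1 h2]; apply: h => i hi.
by rewrite -h2 ?h1 // (leq_trans hi).
Qed.

Lemma G_setI : setI_closed (@G A).
Proof.
move=> S T [->|[n [x ->]]] [->|[m [y ->]]]; try by left; rewrite ?set0I ?setI0.
have [nm|mn] := leqP n m; first exact: preI.
by rewrite setIC; apply: preI; rewrite ltnW.
Qed.

Lemma unique_pre (mu nu : probability (Xborel A) R) :
  (forall n x, mu (pre n x) = nu (pre n x)) ->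
  forall B, measurable B -> mu B = nu B.
Proof.
move=> h B mB.
apply: (measure_unique (@G A) (fun _ => setT) (measurableE hA) G_setI) => //.
- by move=> _; rewrite /G /=; right; exists 0%N, (fun _ => point); rewrite pre0.
- by rewrite bigcup_const.
- by move=> S; rewrite /G /= => -[->|[n [x ->]]]; rewrite ?measure0.
- by move=> _; apply: (le_lt_trans (probability_le1 mu measurableT)); rewrite ltry.
Qed.


Definition tm (mu nu : probability (Xborel A) R) n (a : n.+1.-tuple A) : R :=
  (n.+1)%:R^-1 * `|ln (fine (mu (cyl a))) - ln (fine (nu (cyl a)))|.

Lemma tm_ge0 mu nu n (a : n.+1.-tuple A) : 0 <= tm mu nu a.
Proof. by rewrite /tm mulr_ge0 // invr_ge0. Qed.

Lemma fine_pos (mu : probability (Xborel A) R) : fully_supported mu ->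
  forall n (a : n.-tuple A), 0 < fine (mu (cyl a)).
Proof.
move=> fs n a; apply: fine_gt0; rewrite fs /=.
by rewrite (le_lt_trans (probability_le1 mu (cyl_measurable a))) ?ltry.
Qed.

Lemma fine_cylK (mu : probability (Xborel A) R) n (a : n.-tuple A) :
  ((fine (mu (cyl a)))%:E = mu (cyl a))%E.
Proof.
rewrite fineK // ge0_fin_numE //.
by rewrite (le_lt_trans (probability_le1 mu (cyl_measurable a))) ?ltry.
Qed.

Lemma rhoE (mu nu : probability (Xborel A) R) : fully_supported mu -> fully_supported nu ->
  rho mu nu = ereal_sup [set r | exists n (a : n.+1.-tuple A), r = (tm mu nu a)%:E].
Proof.
move=> fm fn; rewrite /rho; congr ereal_sup; apply/seteqP; split => r [n [a ->]];
  exists n, a; rewrite /tm ln_div ?posrE ?fine_pos //.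
Qed.

Lemma tm_le_rho (mu nu : probability (Xborel A) R) : fully_supported mu -> fully_supported nu ->
  forall n (a : n.+1.-tuple A), ((tm mu nu a)%:E <= rho mu nu)%E.
Proof.
by move=> fm fn n a; rewrite rhoE //; apply: ereal_sup_ubound; exists n, a.
Qed.

Lemma rho_ge0 (mu nu : probability (Xborel A) R) : fully_supported mu -> fully_supported nu ->
  (0 <= rho mu nu)%E.
Proof.
move=> fm fn; apply: le_trans (tm_le_rho fm fn [tuple point | i < 1]).
by rewrite lee_fin tm_ge0.
Qed.

Lemma rhoC (mu nu : probability (Xborel A) R) : fully_supported mu -> fully_supported nu ->
  rho mu nu = rho nu mu.
Proof.
move=> fm fn; rewrite !rhoE //; congr ereal_sup; apply/seteqP; split => r [n [a ->]];
  by exists n, a; rewrite /tm distrC.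
Qed.

Lemma rho_triangle (mu nu eta : probability (Xborel A) R) : fully_supported mu -> fully_supported nu ->
  fully_supported eta -> (rho mu eta <= rho mu nu + rho nu eta)%E.
Proof.
move=> fm fn fe; rewrite [X in (X <= _)%E]rhoE //.
apply: ub_ereal_sup => _ [n [a ->]].
apply: le_trans (leeD (tm_le_rho fm fn a) (tm_le_rho fn fe a)).
rewrite -EFinD lee_fin /tm -mulrDr ler_wpM2l ?invr_ge0 //.
by rewrite (le_trans _ (ler_normD _ _)) // addrA subrK.
Qed.

Lemma rho0P (mu nu : probability (Xborel A) R) : fully_supported mu -> fully_supported nu ->
  rho mu nu = 0%E <-> (forall B : set (Xborel A), measurable B -> mu B = nu B).
Proof.
move=> fm fn; split => [h|h].
  apply: unique_pre => -[|n] x; first by rewrite pre0 !probability_setT.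
  rewrite pre_cyl -fine_cylK -[RHS]fine_cylK; congr EFin.
  set a := [tuple x i | i < n.+1].
  have : ((tm mu nu a)%:E <= 0)%E by rewrite -h tm_le_rho.
  rewrite lee_fin /tm pmulr_rle0 ?invr_gt0 // normr_le0 subr_eq0 => /eqP.
  by apply: ln_inj; rewrite posrE fine_pos.
apply/eqP; rewrite eq_le rho_ge0 // andbT rhoE //.
apply: ub_ereal_sup => _ [n [a ->]].
rewrite /tm h; last exact: cyl_measurable.
by rewrite subrr normr0 mulr0.
Qed.

End Metric.

Section Construct.
Variable A : pointedType.
Variable R : realType.
Variable hA : finite_set [set: A].
Local Notation s := (s A).

Definition upd (x : nat -> A) n c : nat -> A :=
  fun i => if i == n then c else x i.

Variable P : nat -> (nat -> A) -> R.
Hypothesis P0 : forall x, P 0 x = 1.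
Hypothesis Pge0 : forall n x, 0 <= P n x.
Hypothesis Pdep : forall n x y, (forall i, (i < n)%N -> x i = y i) -> P n x = P n y.
Hypothesis Padd : forall n x, P n x = \sum_(c <- s) P n.+1 (upd x n c).

Definition S n x j := \sum_(c <- take j s) P n.+1 (upd x n c).
Definition lo n x := \sum_(0 <= i < n) S i x (index (x i) s).
Definition J n x : set R := [set t | lo n x <= t < lo n x + P n x].

Lemma upd_agree x n c i : (i < n)%N -> upd x n c i = x i.
Proof. by move=> h; rewrite /upd ifN // neq_ltn h. Qed.

Lemma S_dep n x y j : (forall i, (i < n)%N -> x i = y i) -> S n x j = S n y j.
Proof.
move=> h; apply: eq_bigr => c _; apply: Pdep => i hi; rewrite /upd.
by case: eqP => // /eqP ne; apply: h; rewrite ltn_neqAle ne -ltnS.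
Qed.

Lemma lo_dep n x y : (forall i, (i < n)%N -> x i = y i) -> lo n x = lo n y.
Proof.
move=> h; apply: eq_big_nat => i /andP[_ hi].
rewrite h //; apply: S_dep => k hk; apply: h; exact: ltn_trans hk hi.
Qed.

Lemma J_dep n x y : (forall i, (i < n)%N -> x i = y i) -> J n x = J n y.
Proof. by move=> h; rewrite /J (lo_dep h) (Pdep h). Qed.

Lemma lo_upd n x c : lo n.+1 (upd x n c) = lo n x + S n x (index c s).
Proof.
rewrite /lo big_nat_recr //=; congr (_ + _).
  apply: lo_dep => i hi; exact: upd_agree.
rewrite /upd eqxx; apply: S_dep => i hi; exact: upd_agree.
Qed.

Lemma S0 n x : S n x 0 = 0.
Proof. by rewrite /S take0 big_nil. Qed.

Lemma S_size n x : S n x (size s) = P n x.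
Proof. by rewrite /S take_size -Padd. Qed.

Lemma S_succ n x j : (j < size s)%N ->
  S n x j.+1 = S n x j + P n.+1 (upd x n (nth point s j)).
Proof. by move=> h; rewrite /S (take_nth point h) -cats1 big_cat big_seq1. Qed.

Lemma S_mono n x : {homo S n x : i j / (i <= j)%N >-> i <= j}.
Proof.
apply: homo_leq => [?|? ? ?|]; [exact: lexx|exact: le_trans|].
move=> j; have [h|h] := ltnP j (size s).
  by rewrite S_succ // lerDl.
by rewrite /S !take_oversize // ltnW.
Qed.

Lemma S_ge0 n x j : 0 <= S n x j.
Proof. by rewrite -(S0 n x) S_mono. Qed.

Lemma index_lt c : (index c s < size s)%N.
Proof. by rewrite index_mem (s_mem hA). Qed.

Lemma J_upd n x c : J n.+1 (upd x n c) =
  [set t | lo n x + S n x (index c s) <= t < lo n x + S n x (index c s).+1].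
Proof.
rewrite /J lo_upd S_succ ?index_lt // nth_index ?(s_mem hA) //.
by rewrite addrA.
Qed.

Lemma J_upd_sub n x c : J n.+1 (upd x n c) `<=` J n x.
Proof.
rewrite J_upd => t /andP[h1 h2]; apply/andP; split.
  by rewrite (le_trans _ h1) // lerDl S_ge0.
rewrite (lt_le_trans h2) // lerD2l -S_size S_mono //.
exact: index_lt.
Qed.

Lemma upd_self x n : upd x n (x n) = x.
Proof. by apply/funext => i; rewrite /upd; case: eqP => // ->. Qed.

Lemma J_succ_sub n x : J n.+1 x `<=` J n x.
Proof. by rewrite -{1}(upd_self x n); exact: J_upd_sub. Qed.

Lemma J_sub01 n x : J n x `<=` J 0 x.
Proof.
elim: n => // n IH t /J_succ_sub; exact: IH.
Qed.

Lemma J0 x : J 0 x = [set t | 0 <= t < 1].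
Proof. by rewrite /J /lo big_geq // add0r P0. Qed.

Lemma find_step (f : nat -> R) (k : nat) (u : R) :
  {homo f : i j / (i <= j)%N >-> i <= j} -> f 0%N <= u -> u < f k ->
  exists2 j, (j < k)%N & f j <= u < f j.+1.
Proof.
move=> fm h0; elim: k => [|k IH] hk; first by move: (le_lt_trans h0 hk); rewrite ltxx.
have [hk'|hk'] := ltP u (f k).
  by have [j jk hj] := IH hk'; exists j => //; exact: ltnW.
by exists k => //; rewrite hk' hk.
Qed.

Lemma J_cover n x t : J n x t -> exists c, J n.+1 (upd x n c) t.
Proof.
move=> /andP[h1 h2].
have := @find_step (fun j => lo n x + S n x j) (size s) t.
case.
- by move=> i j ij; rewrite lerD2l S_mono.
- by rewrite S0 addr0.
- by rewrite S_size.
move=> j js hj; exists (nth point s j); rewrite J_upd.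
by rewrite index_uniq // (s_uniq A).
Qed.

Lemma J_upd_disj n x c c' : c != c' ->
  J n.+1 (upd x n c) `&` J n.+1 (upd x n c') = set0.
Proof.
wlog : c c' / (index c s < index c' s)%N => [W ne|lt _].
  have : index c s != index c' s.
    by apply: contra ne => /eqP h; rewrite -(nth_index point (s_mem hA c)) h nth_index // (s_mem hA).
  rewrite neq_ltn => /orP[h|h]; first exact: W.
  by rewrite setIC W // eq_sym.
apply/seteqP; split => t // []; rewrite !J_upd => /andP[_ h1] /andP[h2 _].
have := le_lt_trans h2 h1; rewrite ltrD2l => h.
by move: (lt_le_trans h (S_mono n x lt)); rewrite ltxx.
Qed.

Lemma J_disj n x y : (exists2 i, (i < n)%N & x i <> y i) ->
  J n x `&` J n y = set0.
Proof.
elim: n x y => [|n IH] x y [i hi ne] //.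
have [h|h] := pselect (exists2 i, (i < n)%N & x i <> y i).
  apply/seteqP; split => t // [/J_succ_sub h1 /J_succ_sub h2].
  by rewrite -(IH _ _ h); split.
have agree : forall k, (k < n)%N -> x k = y k.
  by move=> k hk; apply/eqP/negPn/negP => /eqP ne'; apply: h; exists k.
have ein : i = n.
  apply/eqP; rewrite eqn_leq -ltnS hi /=; rewrite leqNgt; apply/negP => hin.
  by apply: ne; apply: agree.
subst i.
rewrite -(upd_self x n) -(upd_self y n).
have -> : J n.+1 (upd y n (y n)) = J n.+1 (upd x n (y n)).
  apply: J_dep => k hk; rewrite /upd; case: eqP => // /eqP kn.
  by rewrite agree // ltn_neqAle kn -ltnS.
by apply: J_upd_disj; apply/eqP.
Qed.


Definition dig n (z : nat -> A) (t : R) : A :=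
  nth point s (find (fun c => (lo n.+1 (upd z n c) <= t) &&
                     (t < lo n.+1 (upd z n c) + P n.+1 (upd z n c))) s).

Fixpoint X (t : R) n : nat -> A :=
  if n is m.+1 then upd (X t m) m (dig m (X t m) t) else (fun _ => point).

Definition F (t : R) : nat -> A := fun i => X t i.+1 i.

Lemma X_agree t n m : (n <= m)%N -> forall i, (i < n)%N -> X t m i = X t n i.
Proof.
elim: m => [|m IH]; first by rewrite leqn0 => /eqP ->.
rewrite leq_eqVlt => /predU1P[-> //|hnm] i hi /=.
rewrite upd_agree; first exact: IH.
exact: leq_trans hi hnm.
Qed.

Lemma F_agree t n i : (i < n)%N -> F t i = X t n i.
Proof. by move=> h; rewrite /F (X_agree t h). Qed.

Lemma X_in t : 0 <= t < 1 -> forall n, J n (X t n) t.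
Proof.
move=> t01; elim => [|n IH]; first by rewrite J0.
have [c hc] := J_cover IH.
rewrite /= /dig; set p := (fun c => _).
have : has p s by apply/hasP; exists c => //; exact: (s_mem hA).
by move/(nth_find point).
Qed.

Lemma F_pre t n x : 0 <= t < 1 -> (pre n x (F t) <-> J n x t).
Proof.
move=> t01; split => [hp|hJ].
  rewrite (@J_dep n x (X t n)); first exact: X_in.
  by move=> i hi; rewrite -hp // (F_agree t hi).
move=> i hi; apply/eqP/negPn/negP => /eqP ne.
have : J n (X t n) `&` J n x = set0.
  by apply: J_disj; exists i => //; rewrite -(F_agree t hi).
by move/seteqP => [/(_ t) h _]; apply: h; split => //; exact: X_in.
Qed.

Definition f (t : R) : Xborel A := F (if (0 <= t) && (t < 1) then t else 0).

Lemma J_01 n x t : J n x t -> 0 <= t < 1.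
Proof. by move/J_sub01; rewrite J0. Qed.

Lemma f_pre n x : f @^-1` (pre n x) =
  J n x `|` [set t | ~~ ((0 <= t) && (t < 1)) /\ J n x 0].
Proof.
apply/seteqP; split => t; rewrite /f /=.
  case: ifPn => h; first by move/F_pre => /(_ h) ?; left.
  by move/F_pre => /(_ _) h0; right; split => //; apply: h0; rewrite lexx ltr01.
case: ifPn => h; first by case=> [hJ|[hn _]]; [exact/F_pre|case/negP: hn].
case=> [/J_01 h'|[_ h0]]; first by rewrite h' in h.
by apply/F_pre => //; rewrite lexx ltr01.
Qed.


Lemma J_itv n x : J n x = `[lo n x, lo n x + P n x[%classic.
Proof. by apply/seteqP; split => t; rewrite /= in_itv. Qed.

Lemma f_meas : measurable_fun [set: R] f.
Proof.
apply: (@measurability _ _ R (Xborel A) setT f _ (measurableE hA)).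
move=> _ [B hB <-]; case: hB => [->|[n [x ->]]].
  by rewrite preimage_set0 setI0.
rewrite setTI f_pre; apply: measurableU; first by rewrite J_itv; exact: measurable_itv.
have [h0|h0] := pselect (J n x 0).
  have -> : [set t : R | ~~ ((0 <= t) && (t < 1)) /\ J n x 0] = ~` (`[0, 1[%classic : set R).
    by apply/seteqP; split => t /=; rewrite in_itv /=; [case=> /negP|move/negP].
  by apply: measurableC; exact: measurable_itv.
have -> : [set t : R | ~~ ((0 <= t) && (t < 1)) /\ J n x 0] = set0.
  by apply/seteqP; split => t // [].
exact: measurable0.
Qed.


Definition fm : {mfun measurableTypeR R >-> Xborel A} :=
  HB.pack (f : measurableTypeR R -> Xborel A)
    (@isMeasurableFun.Build _ _ (measurableTypeR R) (Xborel A) f f_meas).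

Definition nu : probability (Xborel A) R :=
  distribution (uniform_prob (@ltr01 R)) fm.

Definition I01 : set R := `[0, 1]%classic.

Lemma uniformE (U : set R) : measurable U ->
  uniform_prob (@ltr01 R) U = lebesgue_measure (U `&` I01).
Proof.
move=> mU; rewrite /uniform_prob integral_uniform_pdf.
transitivity (\int[lebesgue_measure]_(x in U `&` I01) (cst 1%:E) x)%E.
  apply: eq_integral => x; rewrite inE => -[_]; rewrite /= in_itv /= => h.
  by rewrite /uniform_pdf h subr0 invr1.
rewrite integral_cst ?mul1e //; apply: measurableI => //; exact: measurable_itv.
Qed.


Lemma lebJ n x : lebesgue_measure (J n x) = (P n x)%:E.
Proof.
rewrite J_itv lebesgue_measure_itv /= lte_fin ltrDl.
case: ltP => h; first by rewrite -EFinD addrC addKr.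
by congr EFin; apply/eqP; rewrite eq_le h Pge0.
Qed.

Lemma nu_pre n x : nu (pre n x) = (P n x)%:E.
Proof.
rewrite /nu /distribution /pushforward /=.
have mU : measurable (f @^-1` (pre n x) : set R).
  by rewrite -[Y in measurable Y]setTI; apply: f_meas => //; exact: pre_measurable.
rewrite uniformE //.
have mI : measurable I01 by exact: measurable_itv.
have mJ : measurable (J n x) by rewrite J_itv; exact: measurable_itv.
apply/eqP; rewrite eq_le; apply/andP; split.
  rewrite -lebJ; apply: (@le_trans _ _ (lebesgue_measure (J n x `|` [set 1]))); last first.
    apply: (le_trans (measureU2 lebesgue_measure mJ (measurable_set1 (1:R)))).
    rewrite [Y in (_ + Y <= _)%E](_ : _ = 0%E) ?adde0//; exact: lebesgue_measure_set1.
  apply: le_measure; rewrite ?inE //; first exact: measurableI.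
    exact: measurableU.
  move=> t [hU]; rewrite /I01 /= in_itv /= => /andP[t0 t1].
  move: hU; rewrite f_pre => -[hJ|[hn _]]; first by left.
  by right; apply/eqP; rewrite eq_le t1 /= leNgt; apply: contra hn => ->; rewrite t0.
rewrite -lebJ; apply: le_measure; rewrite ?inE //; first exact: measurableI.
move=> t hJ; split; first by rewrite f_pre; left.
by have /andP[t0 t1] := J_01 hJ; rewrite /I01 /= in_itv /= t0 ltW.
Qed.

End Construct.

Import numFieldNormedType.Exports.

Section Complete.
Variable A : pointedType.
Variable R : realType.
Variable hA : finite_set [set: A].
Local Notation s := (s A).

Lemma in_bigsetU (t : seq A) (Q : A -> set (Xborel A)) y :
  (\big[setU/set0]_(c <- t) Q c) y <-> exists2 c, c \in t & Q c y.
Proof.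
elim: t => [|c t IH]; first by rewrite big_nil; split => // -[].
rewrite big_cons; split.
  case=> [h|/IH [c' h1 h2]]; first by exists c; rewrite ?mem_head.
  by exists c'; rewrite // in_cons h1 orbT.
case=> c'; rewrite in_cons => /orP[/eqP ->|h1] h2; first by left.
by right; apply/IH; exists c'.
Qed.

Lemma pre_split n (x : nat -> A) :
  pre n x = \big[setU/set0]_(c <- s) pre n.+1 (upd x n c).
Proof.
apply/seteqP; split => y.
  move=> hy; apply/in_bigsetU; exists (y n); first exact: s_mem.
  move=> i; rewrite ltnS leq_eqVlt => /predU1P[->|hi]; first by rewrite /upd eqxx.
  by rewrite upd_agree // hy.
move/in_bigsetU => [c _ h] i hi; rewrite h ?(ltnW hi) //.
  by rewrite upd_agree.
by rewrite (ltn_trans hi).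
Qed.

Lemma measure_split (mu : probability (Xborel A) R) n (x : nat -> A) :
  mu (pre n x) = (\sum_(c <- s) mu (pre n.+1 (upd x n c)))%E.
Proof.
rewrite pre_split.
suff gen : forall t : seq A, uniq t ->
    mu (\big[setU/set0]_(c <- t) pre n.+1 (upd x n c)) =
    (\sum_(c <- t) mu (pre n.+1 (upd x n c)))%E by exact: gen (s_uniq A).
elim => [|c t IH]; first by rewrite !big_nil measure0.
rewrite cons_uniq => /andP[ct ut]; rewrite !big_cons measureU; first by congr (_ + _)%E; exact: IH ut.
- exact: pre_measurable.
- by apply: bigsetU_measurable => i _; exact: pre_measurable.
apply/seteqP; split => y // [h1 /in_bigsetU [c' h2 h3]].
have e1 : y n = c by have := h1 n (ltnSn n); rewrite /upd eqxx.
have e2 : y n = c' by have := h3 n (ltnSn n); rewrite /upd eqxx.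
by move: ct; rewrite -e1 e2 h2.
Qed.

Variable u : nat -> probability (Xborel A) R.
Hypothesis hu : forall k, fully_supported (u k).

Definition Lv n x m := ln (fine (u m (pre n x))).

Lemma fpre_pos n x m : 0 < fine (u m (pre n x)).
Proof. by rewrite pre_cyl; exact: fine_pos. Qed.

Lemma Lv_bound (e : R) N : (forall m k, (N <= m)%N -> (N <= k)%N ->
   (rho (u m) (u k) < e%:E)%E) ->
  forall n x m k, (N <= m)%N -> (N <= k)%N ->
  `|Lv n x m - Lv n x k| <= n%:R * e.
Proof.
move=> hN [|n] x m k hm hk.
  by rewrite /Lv pre0 !probability_setT /= ln1 subrr normr0 mul0r.
have := tm_le_rho (hu m) (hu k) [tuple x i | i < n.+1].
move/le_lt_trans/(_ (hN m k hm hk)); rewrite lte_fin /tm -pre_cyl.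
rewrite ltr_pdivrMl // => h; exact: ltW.
Qed.


Lemma real_cauchy (v : nat -> R) :
  (forall e, 0 < e -> exists N, forall m k, (N <= m)%N -> (N <= k)%N ->
     `|v m - v k| < e) -> cvgn v.
Proof.
move=> hv; apply/cauchy_cvgP; apply/cauchy_ballP => e e0; near_simpl.
have [N hN] := hv e e0.
exists ([set n | (N <= n)%N], [set n | (N <= n)%N]); first by split; exists N.
by move=> [m k] [/= hm hk]; rewrite -ball_normE /= hN.
Qed.

Lemma lim_sum (t : seq A) (g : A -> nat -> R) (a : A -> R) :
  (forall c, g c @ \oo --> a c) ->
  (fun m => \sum_(c <- t) g c m) @ \oo --> \sum_(c <- t) a c.
Proof.
move=> hg; elim: t => [|c t IH].
  rewrite big_nil; under eq_fun do rewrite big_nil; exact: cvg_cst.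
rewrite big_cons; under eq_fun do rewrite big_cons.
exact: cvgD.
Qed.

Lemma lim_uniq (v : nat -> R) (a b : R) : v @ \oo --> a -> v @ \oo --> b -> a = b.
Proof.
move=> ha hb; rewrite -(cvg_lim (@Rhausdorff R) ha).
exact: (cvg_lim (@Rhausdorff R) hb).
Qed.

Hypothesis hC : forall e : R, 0 < e -> exists N : nat, forall m k : nat,
  (N <= m)%N -> (N <= k)%N -> (rho (u m) (u k) < e%:E)%E.

Lemma Lv_cvg n x : cvgn (Lv n x).
Proof.
apply: real_cauchy => e e0.
have [N hN] := hC (divr_gt0 e0 (ltr0Sn R n)).
exists N => m k hm hk; apply: (le_lt_trans (Lv_bound hN n x hm hk)).
rewrite mulrA ltr_pdivrMr ?ltr0Sn // mulrC ltr_pM2l // ltr_nat.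
exact: ltnSn.
Qed.

Definition ell n x := limn (Lv n x).
Definition Pl n x := expR (ell n x).

Lemma fine_to n x : (fun m => fine (u m (pre n x))) @ \oo --> Pl n x.
Proof.
have -> : (fun m => fine (u m (pre n x))) = expR \o Lv n x.
  by apply/funext => m; rewrite /= /Lv lnK // posrE fpre_pos.
apply: continuous_cvg; [exact: continuous_expR | exact: Lv_cvg].
Qed.


Lemma Pl0 x : Pl 0 x = 1.
Proof.
apply: lim_uniq (fine_to (n:=0%N) (x:=x)) _.
under eq_fun do rewrite pre0 probability_setT /=.
exact: cvg_cst.
Qed.

Lemma Pl_ge0 n x : 0 <= Pl n x.
Proof. exact: expR_ge0. Qed.

Lemma Pl_dep n x y : (forall i, (i < n)%N -> x i = y i) -> Pl n x = Pl n y.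
Proof.
move=> h; have e : pre n x = pre n y.
  by apply/seteqP; split => z hz i hi; rewrite hz // h.
by rewrite /Pl /ell /Lv e.
Qed.

Lemma fin_u m n x : u m (pre n x) \is a fin_num.
Proof.
rewrite ge0_fin_numE //.
by rewrite (le_lt_trans (probability_le1 (u m) (pre_measurable n x))) ?ltry.
Qed.

Lemma Pl_add n x : Pl n x = \sum_(c <- s) Pl n.+1 (upd x n c).
Proof.
apply: lim_uniq (fine_to (n:=n) (x:=x)) _.
have -> : (fun m => fine (u m (pre n x))) =
    (fun m => \sum_(c <- s) fine (u m (pre n.+1 (upd x n c)))).
  apply/funext => m; rewrite measure_split sum_fine // => c _; exact: fin_u.
by apply: lim_sum => c; exact: fine_to.
Qed.

Definition nuL := nu hA Pl0 Pl_ge0 Pl_dep Pl_add.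

Lemma nuL_fs : fully_supported nuL.
Proof.
move=> n a; rewrite cyl_pre /nuL nu_pre lte_fin; exact: expR_gt0.
Qed.

Lemma nuL_lim : forall e : R, 0 < e -> exists N : nat, forall m : nat,
  (N <= m)%N -> (rho (u m) nuL < e%:E)%E.
Proof.
move=> e e0; have e20 : 0 < e / 2 by rewrite divr_gt0.
have [N hN] := hC e20; exists N => m hm.
apply: (@le_lt_trans _ _ (e / 2)%:E); last first.
  by rewrite lte_fin ltr_pdivrMr // ltr_pMr // ltr1n.
rewrite rhoE //; last exact: nuL_fs.
apply: ub_ereal_sup => _ [n [a ->]]; rewrite lee_fin /tm.
rewrite cyl_pre /nuL nu_pre /= expRK.
set xa := (fun i => nth point a i).
rewrite ler_pdivrMl // -/(Lv n.+1 xa m).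
have hw : (fun k => `|Lv n.+1 xa m - Lv n.+1 xa k|) @ \oo --> `|Lv n.+1 xa m - ell n.+1 xa|.
  apply: cvg_norm; apply: cvgB; [exact: cvg_cst | exact: Lv_cvg].
rewrite -(cvg_lim (@Rhausdorff R) hw); apply: limr_le.
  by apply/cvg_ex; eexists; exact: hw.
by exists N => // k /= hk; exact: Lv_bound hN _ _ _ _ hm hk.
Qed.

End Complete.


Unset Implicit Arguments.

Theorem theorem2p1 (A : pointedType) (R : realType)
    (hA : finite_set [set: A]) :
  (* rho is an (extended) metric on M^+(X) *)
  (forall mu nu : probability (Xborel A) R,
      fully_supported mu -> fully_supported nu ->
      (0 <= rho mu nu)%E /\
      rho mu nu = rho nu mu /\
      (rho mu nu = 0%E <->
        (forall B : set (Xborel A), measurable B -> mu B = nu B))) /\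
  (forall mu nu eta : probability (Xborel A) R,
      fully_supported mu -> fully_supported nu -> fully_supported eta ->
      (rho mu eta <= rho mu nu + rho nu eta)%E) /\
  (* completeness: every rho-Cauchy sequence in M^+(X) converges in M^+(X) *)
  (forall u : nat -> probability (Xborel A) R,
      (forall k, fully_supported (u k)) ->
      (forall e : R, 0 < e -> exists N : nat, forall m k : nat,
          (N <= m)%N -> (N <= k)%N -> (rho (u m) (u k) < e%:E)%E) ->
      exists nu : probability (Xborel A) R,
        fully_supported nu /\
        (forall e : R, 0 < e -> exists N : nat, forall m : nat,
            (N <= m)%N -> (rho (u m) nu < e%:E)%E)).
Proof.
split.
  move=> mu nu fm fn; split; first exact: rho_ge0.
  by split; [exact: rhoC | exact: rho0P].
split.
  by move=> mu nu eta fm fn fe; exact: rho_triangle.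
move=> u hu hC; exists (nuL hA hu hC); split.
  exact: nuL_fs.
exact: nuL_lim.
Qed.
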